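(* Let $S=\{x_1,\ldots,x_n\}$ be a factor-closed set of $n$ distinct positive integers. Let $m\ge1$, $\boldsymbol k=(k_1,\ldots,k_m)\in\mathbb{N}^m$, $|\boldsymbol k|:=k_1+\cdots+k_m$, and let $F(\boldsymbol r;\boldsymbol n_1,\ldots,\boldsymbol n_m)$ be even $\pmod{\boldsymbol r^{(\boldsymbol k)}}$. Define the $(m+|\boldsymbol k|)$-dimensional matrix $B$ of order $n$ by \[ B(i_1,\ldots,i_{m+|\boldsymbol k|}):=F\bigl(x_{i_1},\ldots,x_{i_m};\,\underbrace{x_{i_{m+1}},\ldots,x_{i_{m+k_1}}}_{k_1},\ldots,\underbrace{x_{i_{m+k_1+\cdots+k_{m-1}+1}},\ldots,x_{i_{m+|\boldsymbol k|}}}_{k_m}\bigr). \] Let $I\subseteq\{1,\ldots,m+|\boldsymbol k|\}$ have even cardinality and satisfy $\{m+1,\ldots,m+|\boldsymbol k|\}\subseteq I$; put $\varepsilon_j=1$ if $j\in I$ and $0$ otherwise, and let $\widetilde I:=\{j\in\{1,\ldots,m\}:\varepsilon_j+k_j\text{ is odd}\}$. Then \[ \det_IB=(x_1\cdots x_n)^{|\boldsymbol k|}\,\det_{\widetilde I}\Bigl(\alpha_{(x_{i_1},\ldots,x_{i_m})}\bigl(\underbrace{x_{i_1},\ldots,x_{i_1}}_{k_1},\ldots,\underbrace{x_{i_m},\ldots,x_{i_m}}_{k_m}\bigr)\Bigr)_{1\le i_1,\ldots,i_m\le n}. \]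
   Context: A set $S$ of positive integers is factor-closed if every positive divisor of every element of $S$ lies in $S$. $c(k,n):=\sum_{d\mid\gcd(k,n)}\mu(k/d)\,d$ is the Ramanujan sum. For $\boldsymbol r=(r_1,\ldots,r_m)\in\mathbb{N}^m$, variables are grouped as $\boldsymbol n_j\in\mathbb{N}^{k_j}$; for $\boldsymbol n=(n_1,\ldots,n_t)\in\mathbb{N}^t$ and $r\in\mathbb{N}$ write $\gcd(\boldsymbol n,r):=(\gcd(n_1,r),\ldots,\gcd(n_t,r))$, write $\boldsymbol n\mid r$ if $n_i\mid r$ for all $i$, and then $r/\boldsymbol n:=(r/n_1,\ldots,r/n_t)$; for $\boldsymbol a,\boldsymbol b\in\mathbb{N}^t$, $c(\boldsymbol a,\boldsymbol b):=\prod_{i=1}^tc(a_i,b_i)$. A family of functions $F(\boldsymbol r;\boldsymbol n_1,\ldots,\boldsymbol n_m)\in\mathbb{C}$, indexed by $\boldsymbol r\in\mathbb{N}^m$, of the $|\boldsymbol k|$ variables $\boldsymbol n_j\in\mathbb{N}^{k_j}$, is even $\pmod{\boldsymbol r^{(\boldsymbol k)}}$ if $F(\boldsymbol r;\gcd(\boldsymbol n_1,r_1),\ldots,\gcd(\boldsymbol n_m,r_m))=F(\boldsymbol r;\boldsymbol n_1,\ldots,\boldsymbol n_m)$ for all $\boldsymbol r$ and all arguments. Its finite Fourier coefficients are, for $\boldsymbol d_j\in\mathbb{N}^{k_j}$ with $\boldsymbol d_j\mid r_j$, \[ \alpha_{\boldsymbol r}(\boldsymbol d_1,\ldots,\boldsymbol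 d_m):=\frac{1}{r_1^{k_1}\cdots r_m^{k_m}}\sum_{\substack{\boldsymbol\delta_j\in\mathbb{N}^{k_j},\ \boldsymbol\delta_j\mid r_j\\ (j=1,\ldots,m)}}F(\boldsymbol r;\boldsymbol\delta_1,\ldots,\boldsymbol\delta_m)\prod_{j=1}^mc\Bigl(\frac{r_j}{\boldsymbol\delta_j},\frac{r_j}{\boldsymbol d_j}\Bigr). \] Hyperdeterminant: for a $K$-dimensional matrix $A$ of order $n$ and $J\subseteq\{1,\ldots,K\}$, with $\eta_j=1$ if $j\in J$ and $0$ otherwise, $\det_JA:=\frac{1}{n!}\sum_{\sigma_1,\ldots,\sigma_K\in\mathfrak{S}_n}\prod_{j=1}^K\mathrm{sgn}(\sigma_j)^{\eta_j}\prod_{v=1}^nA(\sigma_1(v),\ldots,\sigma_K(v))$, where $\mathfrak{S}_n$ is the symmetric group on $\{1,\ldots,n\}$. *)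

(* Defs.v *)
From HB Require Import structures.
From mathcomp Require Import all_boot all_order all_fingroup all_algebra.
Set Implicit Arguments. Unset Strict Implicit. Unset Printing Implicit Defensive.
Import Order.TTheory GRing.Theory Num.Theory.
Local Open Scope ring_scope.

(* Moebius function (on positive integers; value at 0 irrelevant). *)
Definition moebius (n : nat) : int :=
  if all (fun p => logn p n == 1%N) (primes n)
  then (-1) ^+ size (primes n) else 0.

Definition ramanujan (k n : nat) : int :=
  \sum_(d <- divisors (gcdn k n)) moebius (k %/ d) * d%:Z.

Definition psign (C : nzRingType) n (s : 'S_n) : C := (-1) ^+ odd_perm s.

Definition hdet (C : fieldType) (K n : nat) (J : {set 'I_K})
    (A : {ffun 'I_K -> 'I_n} -> C) : C :=
  (n`!%:R)^-1 * \sum_(s : {ffun 'I_K -> {perm 'I_n}})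
     ((\prod_(j in J) psign C (s j)) *
      \prod_(v < n) A [ffun j => s j v]).

(* Grouped variable indices: p = (j, t) is the t-th variable of group j. *)
Definition vdom (m : nat) (k : 'I_m -> nat) := {j : 'I_m & 'I_(k j)}.

(* Finite Fourier coefficient alpha_r(d) of F (even mod r^(k)).
   The sum over divisor tuples delta (delta_j | r_j) is taken over
   functions into 'I_(max r).+1, filtered by divisibility. *)
Definition alpha (C : numClosedFieldType) (m : nat) (k : 'I_m -> nat)
    (F : {ffun 'I_m -> nat} -> {ffun vdom k -> nat} -> C)
    (r : {ffun 'I_m -> nat}) (d : {ffun vdom k -> nat}) : C :=
  (\prod_(j < m) (r j)%:R ^+ k j)^-1 *
  \sum_(delta : {ffun vdom k -> 'I_(\max_(j < m) r j).+1}
          | [forall p, (nat_of_ord (delta p) %| r (tag p))%N])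
     (F r [ffun p => nat_of_ord (delta p)] *
      \prod_(p : vdom k)
         (ramanujan (r (tag p) %/ delta p) (r (tag p) %/ d p))%:~R).

(* Position (0-based, among the |k| grouped variables) of variable p. *)
Definition voffset (m : nat) (k : 'I_m -> nat) (p : vdom k) : nat :=
  (\sum_(l < m | (l < tag p)%N) k l + tagged p)%N.

Lemma voffset_lt (m : nat) (k : 'I_m -> nat) (p : vdom k) :
  (voffset p < \sum_(l < m) k l)%N.
Proof.
case: p => j t; rewrite /voffset /=.
rewrite [X in (_ < X)%N](bigID (fun l : 'I_m => (l < j)%N)) /=.
rewrite ltn_add2l.
rewrite (bigD1 j) /=; last by rewrite ltnn.
by apply: (leq_trans (ltn_ord t)); rewrite leq_addr.
Qed.

Definition vpos (m : nat) (k : 'I_m -> nat) (p : vdom k) : 'I_(\sum_(l < m) k l) :=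
  Ordinal (voffset_lt p).

Definition matB (C : numClosedFieldType) (n m : nat) (k : 'I_m -> nat)
    (x : 'I_n -> nat)
    (F : {ffun 'I_m -> nat} -> {ffun vdom k -> nat} -> C)
    (i : {ffun 'I_(m + \sum_(l < m) k l) -> 'I_n}) : C :=
  F [ffun j : 'I_m => x (i (lshift (\sum_(l < m) k l) j))]
    [ffun p : vdom k => x (i (rshift m (vpos p)))].

Definition matAlpha (C : numClosedFieldType) (n m : nat) (k : 'I_m -> nat)
    (x : 'I_n -> nat)
    (F : {ffun 'I_m -> nat} -> {ffun vdom k -> nat} -> C)
    (i : {ffun 'I_m -> 'I_n}) : C :=
  alpha F [ffun j => x (i j)] [ffun p : vdom k => x (i (tag p))].

Definition even_mod (C : numClosedFieldType) (m : nat) (k : 'I_m -> nat)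
    (F : {ffun 'I_m -> nat} -> {ffun vdom k -> nat} -> C) : Prop :=
  forall (r : {ffun 'I_m -> nat}) (v : {ffun vdom k -> nat}),
    (forall j, (0 < r j)%N) -> (forall p, (0 < v p)%N) ->
    F r [ffun p => gcdn (v p) (r (tag p))] = F r v.

(* Factor-closed set given by an injective enumeration x of positive ints. *)
Definition factor_closed_enum (n : nat) (x : 'I_n -> nat) : Prop :=
  injective x /\ (forall i, (0 < x i)%N) /\
  (forall i d, (0 < d)%N -> (d %| x i)%N -> exists j, x j = d).

(* Main.v *)
Set Warnings "-notation-overridden,-ambiguous-paths,-notation-incompatible-prefix".
Require Import Defs.
From HB Require Import structures.
From mathcomp Require Import all_boot all_order all_fingroup all_algebra.
From mathcomp Require Import zify ring.
Set Implicit Arguments. Unset Strict Implicit. Unset Printing Implicit Defensive.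
Import Order.TTheory GRing.Theory Num.Theory.
Local Open Scope ring_scope.
Lemma moebius1 : moebius 1 = 1.
Proof. by []. Qed.

Lemma moebius_sq p d : prime p -> (0 < d)%N -> (p ^ 2 %| d)%N -> moebius d = 0.
Proof.
move=> pp d0 hd; rewrite /moebius.
have pin : p \in primes d.
  by rewrite mem_primes pp d0 /=; apply: dvdn_trans hd; rewrite dvdn_exp.
have : (2 <= logn p d)%N by rewrite -pfactor_dvdn.
case: allP => // /(_ p pin) /eqP ->.
by [].
Qed.

Lemma moebius_pM p d : prime p -> (0 < d)%N -> ~~ (p %| d)%N ->
  moebius (p * d) = - moebius d.
Proof.
move=> pp d0 npd.
have p0 : (0 < p)%N by apply: prime_gt0.
have pnin : p \notin primes d by rewrite mem_primes pp d0 /=.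
have Hperm : perm_eq (primes (p * d)) (p :: primes d).
  apply: uniq_perm; first exact: primes_uniq.
    by rewrite /= pnin primes_uniq.
  by move=> q; rewrite primesM // (primes_prime pp) !in_cons in_nil orbF.
rewrite /moebius (perm_size Hperm) (perm_all _ Hperm) /=.
have -> : logn p (p * d) = 1%N.
  rewrite lognM // logn_prime // eqxx.
  by move: pnin; rewrite -logn_gt0 lt0n negbK => /eqP ->.
rewrite eqxx /=.
rewrite (@eq_in_all _ _ (fun q => logn q d == 1%N)); last first.
  move=> q qin /=; rewrite lognM // logn_prime //.
  have -> : (q == p) = false by apply/eqP => eqp; move: pnin; rewrite -eqp qin.
  by [].
by case: all => //; rewrite exprS mulN1r.
Qed.

Lemma moebius_sum c : (0 < c)%N ->
  \sum_(d <- divisors c) moebius d = (c == 1)%N%:R.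
Proof.
move=> c0; case: (ltngtP c 1) => [|c1|->]; first by rewrite ltnNge c0.
  2: by rewrite big_seq1.
set p := pdiv c.
have pp : prime p by apply: pdiv_prime.
have p0 : (0 < p)%N by apply: prime_gt0.
have pc : (p %| c)%N by apply: pdiv_dvd.
pose io d := if (p %| d)%N then (d %/ p)%N else (p * d)%N.
pose s := [seq d <- divisors c | ~~ (p ^ 2 %| d)%N].
have mems d : (d \in s) = (d %| c)%N && ~~ (p ^ 2 %| d)%N.
  by rewrite mem_filter -dvdn_divisors // andbC.
have dpos d : d \in s -> (0 < d)%N.
  rewrite mems => /andP [dc _]; rewrite lt0n; apply/eqP => d0.
  by move: dc; rewrite d0 dvd0n => /eqP c00; move: c0; rewrite c00.
have io_in d : d \in s -> io d \in s.
  move=> ds; have d0 := dpos d ds; move: ds; rewrite !mems => /andP [dc nsq].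
  case pd: (p %| d)%N; rewrite /io pd.
    apply/andP; split; first by apply: dvdn_trans dc; apply: dvdn_div.
    apply: contra nsq => h; rewrite -(divnK pd).
    by apply: dvdn_mulr. 
  apply/andP; split.
    by rewrite Gauss_dvd ?prime_coprime ?pd ?pc.
  by rewrite expnS expn1 dvdn_pmul2l // pd.
have ioK d : d \in s -> io (io d) = d.
  move=> ds; have d0 := dpos d ds; move: ds; rewrite !mems => /andP [dc nsq].
  case pd: (p %| d)%N; rewrite /io pd.
    have -> : (p %| d %/ p)%N = false.
      apply/negP => h; move: nsq; rewrite -(divnK pd) expnS expn1 mulnC.
      by rewrite dvdn_pmul2l // h.
    by rewrite mulnC divnK.
  by rewrite dvdn_mulr // mulKn.
have mio d : d \in s -> moebius (io d) = - moebius d.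
  move=> ds; have d0 := dpos d ds; move: ds; rewrite !mems /io => /andP [dc nsq].
  case pd: (p %| d)%N; last by rewrite moebius_pM // pd.
  have npd' : ~~ (p %| d %/ p)%N.
    apply/negP => h; move: nsq; rewrite -(divnK pd) expnS expn1 mulnC.
    by rewrite dvdn_pmul2l // h.
  have d'0 : (0 < d %/ p)%N by rewrite divn_gt0 // dvdn_leq.
  by rewrite -{2}(divnK pd) mulnC moebius_pM // opprK.
have Hs : \sum_(d <- divisors c) moebius d = \sum_(d <- s) moebius d.
  rewrite /s big_filter [RHS]big_mkcond /=; apply: eq_big_seq => d dc /=.
  case: ifP => //= /negbFE h; apply: moebius_sq h => //.
  by apply: (@dvdn_gt0 d c); rewrite // dvdn_divisors.
have Hp : perm_eq s (map io s).
  apply: uniq_perm; first by rewrite filter_uniq // divisors_uniq.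
    rewrite map_inj_in_uniq ?filter_uniq ?divisors_uniq //.
    by move=> d1 d2 h1 h2 e; rewrite -(ioK d1 h1) e ioK.
  move=> d; apply/idP/mapP => [ds|[d' ds ->]]; last exact: io_in.
  by exists (io d); rewrite ?io_in ?ioK.
have : \sum_(d <- s) moebius d = - \sum_(d <- s) moebius d.
  rewrite {1}(perm_big _ Hp) big_map -sumrN; apply: eq_big_seq => d ds.
  exact: mio.
by rewrite Hs; lia.
Qed.

Definition divC (C : nzRingType) (a b : nat) : C := if (a %| b)%N then 1 else 0.
Definition mu (C : nzRingType) (d : nat) : C := (moebius d)%:~R.

Lemma mu_sum (C : nzRingType) c : (0 < c)%N ->
  \sum_(d <- divisors c) mu C d = (c == 1)%N%:R.
Proof.
by move=> c0; rewrite /mu -mulrz_sumr moebius_sum //; case: (c == 1)%N.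
Qed.

Lemma pickx n (x : 'I_n -> nat) (hx : factor_closed_enum x) (i : 'I_n) d :
  (0 < d)%N -> (d %| x i)%N -> {j : 'I_n | x j = d}.
Proof.
move=> d0 di; case: (pickP (fun j => x j == d)) => [j /eqP <-|H]; first by exists j.
exfalso; case: hx => _ [_ /(_ i d d0 di) [j xj]].
by move: (H j); rewrite xj eqxx.
Qed.

Lemma xpos n (x : 'I_n -> nat) (hx : factor_closed_enum x) i : (0 < x i)%N.
Proof. by case: hx => _ []. Qed.

Lemma xinj n (x : 'I_n -> nat) (hx : factor_closed_enum x) : injective x.
Proof. by case: hx. Qed.

Lemma mob1 (C : nzRingType) n (x : 'I_n -> nat) (hx : factor_closed_enum x)
    (a b : 'I_n) :
  \sum_(t : 'I_n) divC C (x t) (x b) * divC C (x a) (x t) * mu C (x t %/ x a)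
  = (a == b)%:R.
Proof.
rewrite (eq_bigr (fun t => if (x a %| x t)%N && (x t %| x b)%N
                           then mu C (x t %/ x a) else 0)); last first.
  by move=> t _; rewrite /divC; do 2 case: ifP; rewrite /= ?mul1r ?mul0r.
rewrite -big_mkcond /=.
have xa0 := xpos hx a.
case hab: (x a %| x b)%N; last first.
  rewrite big_pred0 => [|t]; last first.
    by apply/negP => /andP [h1 h2]; move: hab; rewrite (dvdn_trans h1 h2).
  by case: eqP => // eab; move: hab; rewrite eab dvdnn.
case/dvdnP: hab => c Hc.
have c0 : (0 < c)%N.
  by move: (xpos hx b); rewrite Hc muln_gt0 => /andP [].
rewrite -big_filter -(big_map (fun t => x t %/ x a)%N xpredT).
set s := map _ _.
have Hp : perm_eq s (divisors c).
  apply: uniq_perm; last first.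
  - move=> d; rewrite -dvdn_divisors //; apply/mapP/idP.
      move=> [t]; rewrite mem_filter => /andP [/andP [h1 h2] _] ->.
      case/dvdnP: h1 => e He; rewrite He mulnK //.
      by move: h2; rewrite He Hc dvdn_pmul2r.
    move=> dc; have d0 : (0 < d)%N by apply: dvdn_gt0 dc.
    have [t xt] : {t : 'I_n | x t = (d * x a)%N}.
      by apply: (@pickx n x hx b); rewrite ?muln_gt0 ?d0 // Hc dvdn_pmul2r.
    exists t; last by rewrite xt mulnK.
    rewrite mem_filter mem_index_enum xt andbT Hc dvdn_pmul2r // dc andbT. by apply: dvdn_mull.
  - by apply: divisors_uniq.
  rewrite map_inj_in_uniq ?filter_uniq ?index_enum_uniq //.
  move=> t1 t2; rewrite !mem_filter => /andP [/andP [h1 _] _] /andP [/andP [h2 _] _] e.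
  by apply: (xinj hx); rewrite -(divnK h1) -(divnK h2) e.
rewrite (perm_big _ Hp) /= mu_sum //.
have -> : (c == 1)%N = (a == b); last by [].
apply/eqP/eqP => [c1|eab].
  by apply: (xinj hx); rewrite Hc c1 mul1n.
by apply/eqP; rewrite -(eqn_pmul2r xa0) mul1n -Hc eab.
Qed.

Lemma mobinv (C : comNzRingType) n (x : 'I_n -> nat) (hx : factor_closed_enum x)
   (T : finType) (Phi : {ffun T -> 'I_n} -> C) (w : {ffun T -> 'I_n}) :
  \sum_(e : {ffun T -> 'I_n}) (\prod_p divC C (x (e p)) (x (w p))) *
    (\sum_(e' : {ffun T -> 'I_n}) (\prod_p divC C (x (e' p)) (x (e p))) * Phi e'
        * \prod_p mu C (x (e p) %/ x (e' p))%N)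
  = Phi w.
Proof.
transitivity (\sum_(e' : {ffun T -> 'I_n}) Phi e' * \prod_(p : T) \sum_(t : 'I_n)
   (divC C (x t) (x (w p)) * divC C (x (e' p)) (x t) * mu C (x t %/ x (e' p))%N)).
  under eq_bigr do rewrite big_distrr.
  rewrite exchange_big /=; apply: eq_bigr => e' _.
  rewrite bigA_distr_bigA /= big_distrr /=; apply: eq_bigr => e _.
  rewrite !big_split /=; ring.
under eq_bigr do under eq_bigr do rewrite (mob1 C hx).
rewrite (bigD1 w) //=.
rewrite [X in _ * X]big1 ?mulr1; last by move=> p _; rewrite eqxx.
rewrite [X in _ + X]big1 ?addr0 //.
move=> e' ne'; case: (pickP (fun p => e' p != w p)) => [p hp | H].
  by rewrite (bigD1 p) //= (negbTE hp) mul0r mulr0.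
have ew : e' = w by apply/ffunP => p; apply/eqP; apply: negbFE (H p).
by rewrite ew eqxx in ne'.
Qed.

Definition Hf (C : numClosedFieldType) n m (k : 'I_m -> nat) (x : 'I_n -> nat)
    (F : {ffun 'I_m -> nat} -> {ffun vdom k -> nat} -> C)
    (al : {ffun 'I_m -> 'I_n}) (e : {ffun vdom k -> 'I_n}) : C :=
  \sum_(e' : {ffun vdom k -> 'I_n}) (\prod_p divC C (x (e' p)) (x (e p))) *
     F [ffun j => x (al j)] [ffun p => x (e' p)] *
     \prod_p mu C (x (e p) %/ x (e' p))%N.

Definition Gf (C : numClosedFieldType) n m (k : 'I_m -> nat) (x : 'I_n -> nat)
    (F : {ffun 'I_m -> nat} -> {ffun vdom k -> nat} -> C)
    (al : {ffun 'I_m -> 'I_n}) (e : {ffun vdom k -> 'I_n}) : C :=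
  (\prod_p divC C (x (e p)) (x (al (tag p)))) * Hf x F al e.

Lemma expand (C : numClosedFieldType) n m (k : 'I_m -> nat) (x : 'I_n -> nat)
    (F : {ffun 'I_m -> nat} -> {ffun vdom k -> nat} -> C)
    (hx : factor_closed_enum x) (hF : even_mod F) (al : {ffun 'I_m -> 'I_n})
    (rf : {ffun 'I_m -> nat}) (vf : {ffun vdom k -> nat}) (w : {ffun vdom k -> 'I_n}) :
  (forall j, rf j = x (al j)) -> (forall p, vf p = x (w p)) ->
  F rf vf = \sum_(e : {ffun vdom k -> 'I_n})
              (\prod_p divC C (x (e p)) (x (w p))) * Gf x F al e.
Proof.
move=> hr hv.
have hr' : rf = [ffun j => x (al j)] by apply/ffunP => j; rewrite ffunE.
pose w' := [ffun p => odflt (w p)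
              [pick j | x j == gcdn (x (w p)) (x (al (tag p)))]].
have hw' p : x (w' p) = gcdn (x (w p)) (x (al (tag p))).
  rewrite ffunE; case: pickP => [j /eqP //|H]; exfalso.
  have g0 : (0 < gcdn (x (w p)) (x (al (tag p))))%N by rewrite gcdn_gt0 (xpos hx).
  have [j xj] := @pickx n x hx (w p) _ g0 (dvdn_gcdl _ _).
  by move: (H j); rewrite xj eqxx.
clearbody w'.
have -> : F rf vf = F [ffun j => x (al j)] [ffun p => x (w' p)].
  rewrite -hF; last first.
  - by move=> p; rewrite hv (xpos hx).
  - by move=> j; rewrite hr (xpos hx).
  by rewrite -hr'; congr (F _ _); apply/ffunP => p; rewrite !ffunE hw' hv hr.
have := mobinv hx (fun e' => F [ffun j => x (al j)] [ffun p => x (e' p)]) w'.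
move=> /= <-.
apply: eq_bigr => e _; rewrite /Gf /Hf mulrA; congr (_ * _).
rewrite -big_split; apply: eq_bigr => p _ /=.
rewrite hw' /divC dvdn_gcd.
by case: (x (e p) %| x (w p))%N; case: (x (e p) %| x (al (tag p)))%N; rewrite /= ?mulr1 ?mulr0.
Qed.

Lemma perm_div_eq n (x : 'I_n -> nat) (hx : factor_closed_enum x) (s t : {perm 'I_n}) :
  (forall v, (x (t v) %| x (s v))%N) -> t = s.
Proof.
move=> h.
have le v : (x (t v) <= x (s v))%N by apply: dvdn_leq (xpos hx _) (h v).
have e1 : (\sum_v x (t v) = \sum_v x v)%N.
  by symmetry; apply: (reindex_inj (@perm_inj _ t)).
have e2 : (\sum_v x (s v) = \sum_v x v)%N.
  by symmetry; apply: (reindex_inj (@perm_inj _ s)).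
have : (\sum_v (x (s v) - x (t v)) == 0)%N by rewrite sumnB // e1 e2 subnn.
rewrite sum_nat_eq0 => /forallP H.
apply/permP => v; apply: (xinj hx); apply/eqP; rewrite eqn_leq le /=.
by rewrite -subn_eq0; move: (H v) => /implyP; apply.
Qed.

Definition Dg (C : nzRingType) n (x : 'I_n -> nat) (g : 'I_n -> 'I_n) : C :=
  \sum_(s : {perm 'I_n}) psign C s * \prod_v divC C (x (g v)) (x (s v)).

Lemma D_perm (C : comNzRingType) n (x : 'I_n -> nat) (hx : factor_closed_enum x)
   (g : 'I_n -> 'I_n) (t : {perm 'I_n}) :
  (forall v, g v = t v) -> Dg C x g = psign C t.
Proof.
move=> hg; rewrite /Dg (bigD1 t) //=.
rewrite [X in _ * X]big1 ?mulr1; last by move=> v _; rewrite /divC hg dvdnn.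
rewrite [X in _ + X]big1 ?addr0 //.
  move=> s nst; case: (pickP (fun v => ~~ (x (g v) %| x (s v))%N)) => [v hv|H].
    by rewrite (bigD1 v) //= /divC (negbTE hv) mul0r mulr0.
  have ets : t = s.
    by apply: (perm_div_eq hx) => v; rewrite -hg; move: (H v) => /negbFE.
  by rewrite ets eqxx in nst.
Qed.

Lemma D_noninj (C : comNzRingType) n (x : 'I_n -> nat) (g : 'I_n -> 'I_n) :
  ~~ injectiveb g -> Dg C x g = 0.
Proof.
move=> /injectivePn [v1 [v2 nv e]].
have -> : Dg C x g = \det (\matrix_(v, i) divC C (x (g v)) (x i)).
  rewrite /determinant /Dg; apply: eq_bigr => s _; rewrite /psign.
  by congr (_ * _); apply: eq_bigr => v _; rewrite mxE.
by apply: (determinant_alternate nv) => i; rewrite !mxE e.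
Qed.

Lemma stepC (C : numClosedFieldType) n m (k : 'I_m -> nat) (x : 'I_n -> nat)
    (F : {ffun 'I_m -> nat} -> {ffun vdom k -> nat} -> C)
    (hx : factor_closed_enum x) (hF : even_mod F) (a : {ffun 'I_m -> {perm 'I_n}}) :
  \sum_(b : {ffun vdom k -> {perm 'I_n}}) (\prod_p psign C (b p)) *
     \prod_(v < n) F [ffun j => x (a j v)] [ffun p => x (b p v)]
  = (\prod_(p : vdom k) psign C (a (tag p))) *
     \prod_(v < n) Gf x F [ffun j => a j v] [ffun p => a (tag p) v].
Proof.
transitivity (\sum_(b : {ffun vdom k -> {perm 'I_n}}) (\prod_p psign C (b p)) *
   \sum_(f : {ffun 'I_n -> {ffun vdom k -> 'I_n}}) \prod_v
     ((\prod_p divC C (x (f v p)) (x (b p v))) * Gf x F [ffun j => a j v] (f v))).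
  apply: eq_bigr => b _; congr (_ * _).
  rewrite -(bigA_distr_bigA (fun (v : 'I_n) (e : {ffun vdom k -> 'I_n}) => (\prod_p divC C (x (e p)) (x (b p v))) *
                                        Gf x F [ffun j => a j v] e)) /=.
  apply: eq_bigr => v _.
  rewrite (expand hx hF (al := [ffun j => a j v]) (w := [ffun p => b p v])).
  - by apply: eq_bigr => e _; congr (_ * _); apply: eq_bigr => p _; rewrite ffunE.
  - by move=> j; rewrite !ffunE.
  - by move=> p; rewrite !ffunE.
under eq_bigr do rewrite big_distrr /=.
rewrite exchange_big /=.
transitivity (\sum_(f : {ffun 'I_n -> {ffun vdom k -> 'I_n}})
   (\prod_v Gf x F [ffun j => a j v] (f v)) *
   \prod_(p : vdom k) Dg C x (fun v => f v p)).
  apply: eq_bigr => f _.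
  transitivity ((\prod_v Gf x F [ffun j => a j v] (f v)) *
     \sum_(b : {ffun vdom k -> {perm 'I_n}}) \prod_p
        (psign C (b p) * \prod_v divC C (x (f v p)) (x (b p v)))).
    rewrite big_distrr /=; apply: eq_bigr => b _.
    rewrite big_split /= big_split /= [X in _ = _ * X]big_split /=.
    rewrite [X in _ = _ * (_ * X)]exchange_big /=.
    ring.
  congr (_ * _).
  rewrite (bigA_distr_bigA (fun p s => psign C s * \prod_v divC C (x (f v p)) (x (s v)))).
  by [].
pose fs := [ffun v : 'I_n => [ffun p : vdom k => a (tag p) v]].
rewrite (bigD1 fs) //= [X in _ + X]big1 ?addr0.
  rewrite mulrC; congr (_ * _).
    by apply: eq_bigr => p _; apply: (@D_perm C n x hx) => v; rewrite !ffunE.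

  by apply: eq_bigr => v _; rewrite /fs ffunE.
move=> f nf.
case: (pickP (fun vp : 'I_n * vdom k => f vp.1 vp.2 != a (tag vp.2) vp.1))
   => [[v0 p0] /= hne | H]; last first.
  have efs : f = fs.
    apply/ffunP => v; apply/ffunP => p; rewrite !ffunE; apply/eqP.
    by move: (H (v, p)) => /negbFE.
  by rewrite efs eqxx in nf.
case: (injectiveP (fun v => f v p0)) => [inj|ninj]; last first.
  rewrite (bigD1 p0) //= D_noninj ?mul0r ?mulr0 //.
  by apply/injectiveP.
case: (pickP (fun v => ~~ (x (f v p0) %| x (a (tag p0) v))%N)) => [v1 hv1 | H].
  rewrite (bigD1 v1) //= /Gf (bigD1 p0) //= ffunE /divC (negbTE hv1).
  by rewrite !mul0r.
have eq1 : perm inj = a (tag p0).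
  by apply: (perm_div_eq hx) => v; rewrite permE; apply: negbFE (H v).
by exfalso; move: hne; rewrite -eq1 permE eqxx.
Qed.

Lemma ramanujan1 z : ramanujan z 1 = moebius z.
Proof.
rewrite /ramanujan gcdn1 (_ : divisors 1 = [:: 1%N]) //.
by rewrite big_seq1 divn1 mulr1.
Qed.

Lemma inord_div M c d : (0 < c)%N -> (c <= M)%N ->
  (((inord d : 'I_M.+1) : nat) %| c)%N = (d %| c)%N.
Proof.
move=> c0 cM; case: (ltnP d M.+1) => dM; first by rewrite inordK.
rewrite /inord val_insubd ltnNge dM /= dvd0n.
have -> : (d %| c)%N = false.
  by apply/negP => /(dvdn_leq c0) dc; move: dM; rewrite ltnNge (leq_trans dc cM).
by rewrite gtn_eqF.
Qed.

Lemma inord_val_div M c d : (0 < c)%N -> (c <= M)%N -> (d %| c)%N ->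
  ((inord d : 'I_M.+1) : nat) = d.
Proof.
move=> c0 cM dc; rewrite inordK // ltnS; exact: leq_trans (dvdn_leq c0 dc) cM.
Qed.

Lemma prod_tag (R : comNzRingType) m (k : 'I_m -> nat) (f : 'I_m -> R) :
  \prod_(p : vdom k) f (tag p) = \prod_(j < m) f j ^+ k j.
Proof.
transitivity (\prod_(j < m) \prod_(t : 'I_(k j)) f j).
  rewrite (sig_big_dep xpredT (fun i (_ : 'I_(k i)) => true)
             (fun i (_ : 'I_(k i)) => f i)) /=.
  by apply: eq_bigl.
by apply: eq_bigr => j _; rewrite prodr_const card_ord.
Qed.

Lemma prod_ind (R : comNzRingType) (T : finType) (P : pred T) :
  \prod_(p : T) (if P p then (1 : R) else 0) = if [forall p, P p] then 1 else 0.
Proof.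
case: forallP => [H|H].
  by apply: big1 => p _; rewrite H.
case: (pickP (fun p => ~~ P p)) => [p hp|H'].
  by rewrite (bigD1 p) //= (negbTE hp) mul0r.
by exfalso; apply: H => p; apply/negbFE/H'.
Qed.

Lemma diagG (C : numClosedFieldType) n m (k : 'I_m -> nat) (x : 'I_n -> nat)
    (F : {ffun 'I_m -> nat} -> {ffun vdom k -> nat} -> C)
    (hx : factor_closed_enum x) (al : {ffun 'I_m -> 'I_n}) :
  Gf x F al [ffun p => al (tag p)] =
  (\prod_(p : vdom k) (x (al (tag p)))%:R) * matAlpha x F al.
Proof.
rewrite /Gf big1 ?mul1r; last by move=> p _; rewrite ffunE /divC dvdnn.
rewrite /matAlpha /alpha.
set r := [ffun j => x (al j)].
have r0 j : (0 < r j)%N by rewrite ffunE (xpos hx).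
have prodeq : \prod_(p : vdom k) (x (al (tag p)))%:R = \prod_(j < m) (r j)%:R ^+ k j :> C.
  by rewrite (prod_tag k (fun j => (x (al j))%:R : C)); apply: eq_bigr => j _; rewrite ffunE.
rewrite prodeq mulrA mulfV ?mul1r; last first.
  by rewrite prodf_seq_neq0; apply/allP => j _ /=; rewrite expf_neq0 // pnatr_eq0 -lt0n.
set M := (\max_(j < m) r j)%N.
have rM j : (r j <= M)%N by rewrite /M; apply: (@leq_bigmax _ (fun j => r j) j).
pose h (e : {ffun vdom k -> 'I_n}) : {ffun vdom k -> 'I_M.+1} :=
  [ffun p => inord (x (e p))].
pose h' (de : {ffun vdom k -> 'I_M.+1}) : {ffun vdom k -> 'I_n} :=
  [ffun p => odflt (al (tag p)) [pick j | x j == de p]].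
rewrite (reindex_onto h h'); last first.
  move=> de /forallP H; apply/ffunP => p; rewrite !ffunE.
  have dp0 : (0 < de p)%N by apply: dvdn_gt0 (r0 (tag p)) (H p).
  have [j xj] := @pickx n x hx (al (tag p)) (de p) dp0
     ltac:(by move: (H p); rewrite ffunE).
  case: pickP => [j' /eqP -> | H']; first by rewrite inord_val.
  by move: (H' j); rewrite xj eqxx.
rewrite /Hf -/r (eq_bigr (fun e' : {ffun vdom k -> 'I_n} => if [forall p, x (e' p) %| r (tag p)]%N
   then F r [ffun p => x (e' p)] * \prod_p mu C (x (al (tag p)) %/ x (e' p))%N
   else 0)); last first.
  move=> e' _; rewrite (eq_bigr (fun p => if (x (e' p) %| r (tag p))%N then 1 else 0)).
    rewrite prod_ind; case: ifP; rewrite ?mul1r ?mul0r //.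
    by move=> _; congr (_ * _); apply: eq_bigr => p _; rewrite ffunE.
  by move=> p _; rewrite !ffunE.
have rM' j : (x (al j) <= M)%N by have := rM j; rewrite ffunE.
have r0' j : (0 < x (al j))%N by apply: (xpos hx).
rewrite -big_mkcond /=; apply: eq_big.
  move=> e'; apply/idP/andP.
    move=> /forallP H.
    have H1 p : (x (e' p) %| x (al (tag p)))%N by have := H p; rewrite ffunE.
    split.
      by apply/forallP => p; rewrite !ffunE inord_div.
    apply/eqP/ffunP => p; rewrite !ffunE (inord_val_div (r0' _) (rM' _) (H1 p)).
    case: pickP => [j /eqP xj | H']; first by apply: (xinj hx).
    by move: (H' (e' p)); rewrite eqxx.
  move=> [/forallP H _]; apply/forallP => p; move: (H p); rewrite !ffunE inord_div //.
move=> e' /forallP H.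
have H1 p : (x (e' p) %| x (al (tag p)))%N by have := H p; rewrite ffunE.
congr (_ * _).
  congr (F _ _); apply/ffunP => p; rewrite !ffunE.
  by rewrite (inord_val_div (r0' _) (rM' _) (H1 p)).
apply: eq_bigr => p _; rewrite !ffunE (inord_val_div (r0' _) (rM' _) (H1 p)).
by rewrite divnn (xpos hx) ramanujan1.
Qed.

Lemma card_vdom m (k : 'I_m -> nat) : #|{: vdom k}| = (\sum_(l < m) k l)%N.
Proof.
transitivity (\sum_(j < m) \sum_(t : 'I_(k j)) 1)%N; last first.
  by apply: eq_bigr => j _; rewrite sum1_card card_ord.
rewrite (sig_big_dep xpredT (fun i (_ : 'I_(k i)) => true)
           (fun i (_ : 'I_(k i)) => 1%N)) /= -sum1_card.
by apply: eq_bigl.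
Qed.

Lemma S_mono m (k : 'I_m -> nat) (j1 j2 : 'I_m) : (j1 < j2)%N ->
  (\sum_(l < m | (l < j1)%N) k l + k j1 <= \sum_(l < m | (l < j2)%N) k l)%N.
Proof.
move=> lt; rewrite [X in (_ <= X)%N](bigD1 j1) //= addnC leq_add2l.
rewrite [X in (_ <= X)%N](bigID (fun l : 'I_m => (l < j1)%N)) /=.
apply: leq_trans (leq_addr _ _); rewrite leq_eqVlt; apply/orP; left; apply/eqP.
apply: eq_bigl => l; case: (ltnP l j1) => h; last by rewrite andbF.
rewrite andbT (ltn_trans h lt) /=; apply/esym/eqP => e.
by move: h; rewrite e ltnn.
Qed.

Lemma vpos_inj m (k : 'I_m -> nat) : injective (@vpos m k).
Proof.
move=> [j1 t1] [j2 t2] /(congr1 val) /=; rewrite /voffset /=.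
have o1 := ltn_ord t1; have o2 := ltn_ord t2.
case: (ltngtP j1 j2) => [lt|lt|eq] e.
- have := S_mono k lt; move: e; move: (\sum_(l < m | (l < j1)%N) k l) (\sum_(l < m | (l < j2)%N) k l) => S1 S2 h1 h2; exfalso; lia.
- have := S_mono k lt; move: e; move: (\sum_(l < m | (l < j1)%N) k l) (\sum_(l < m | (l < j2)%N) k l) => S1 S2 h1 h2; exfalso; lia.
have ej : j1 = j2 by apply: ord_inj.
subst j2; have et : t1 = t2 by apply: ord_inj; lia.
by rewrite et.
Qed.

Lemma vpos_bij m (k : 'I_m -> nat) : bijective (@vpos m k).
Proof. by apply: inj_card_bij; [apply: vpos_inj | rewrite card_vdom card_ord]. Qed.

Lemma psign_exp (C : nzRingType) n (s : {perm 'I_n}) e :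
  psign C s ^+ e = if odd e then psign C s else 1.
Proof.
rewrite /psign -exprM -[LHS]signr_odd oddM.
by case: (odd_perm s); case: (odd e).
Qed.

Lemma sign_comb (C : comNzRingType) n m (k : 'I_m -> nat) (P : pred 'I_m)
    (a : 'I_m -> {perm 'I_n}) :
  (\prod_(i < m | P i) psign C (a i)) * \prod_(i < m) psign C (a i) ^+ k i =
  \prod_(i in [set j : 'I_m | odd (P j + k j)]) psign C (a i).
Proof.
rewrite big_mkcond /= -big_split /= [RHS]big_mkcond /=; apply: eq_bigr => i _.
rewrite in_set psign_exp oddD.
case: (P i); case: (odd (k i)); rewrite /= ?mul1r ?mulr1 //.
by rewrite /psign -signr_addb addbb.
Qed.

Lemma prod_x_perm (C : comNzRingType) n (x : 'I_n -> nat) (s : {perm 'I_n}) :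
  \prod_(v < n) ((x (s v))%:R : C) = \prod_(i < n) (x i)%:R.
Proof. by symmetry; apply: (reindex_inj (@perm_inj _ s)). Qed.

Unset Implicit Arguments.

Theorem proposition4p4 (C : numClosedFieldType) (n m : nat) (x : 'I_n -> nat)
    (k : 'I_m -> nat)
    (F : {ffun 'I_m -> nat} -> {ffun vdom k -> nat} -> C)
    (I : {set 'I_(m + \sum_(l < m) k l)}) :
  factor_closed_enum x ->
  (0 < m)%N ->
  even_mod F ->
  ~~ odd #|I| ->
  (forall q : 'I_(\sum_(l < m) k l), rshift m q \in I) ->
  hdet I (matB x F) =
  (\prod_(i < n) (x i)%:R) ^+ (\sum_(l < m) k l) *
  hdet [set j : 'I_m | odd ((lshift (\sum_(l < m) k l) j \in I) + k j)]
       (matAlpha x F).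
Proof.
move=> hx _ hF _ hI.
rewrite /hdet mulrCA; congr (_ * _).
set N := (\sum_(l < m) k l)%N.
pose Psi (a : {ffun 'I_m -> {perm 'I_n}}) (b : {ffun vdom k -> {perm 'I_n}}) : C :=
  (\prod_(i < m | lshift N i \in I) psign C (a i)) *
  ((\prod_p psign C (b p)) *
   \prod_(v < n) F [ffun j => x (a j v)] [ffun p => x (b p v)]).
pose g (s : {ffun 'I_(m + N) -> {perm 'I_n}}) : {ffun 'I_m -> {perm 'I_n}} * {ffun vdom k -> {perm 'I_n}} :=
  ([ffun i => s (lshift N i)], [ffun p => s (rshift m (vpos p))]).
have [vinv vK vK'] := vpos_bij k.
have g_bij : bijective g.
  apply: inj_card_bij.
    move=> s1 s2 e; apply/ffunP => j.
    have e1 := congr1 fst e; have e2 := congr1 snd e; rewrite /= in e1 e2.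
    case: (splitP j) => [i ej | q ej].
      have -> : j = lshift N i by apply: ord_inj.
      by move/ffunP: e1 => /(_ i); rewrite !ffunE.
    have -> : j = rshift m (vpos (vinv q)) by apply: ord_inj; rewrite vK'.
    by move/ffunP: e2 => /(_ (vinv q)); rewrite !ffunE.
  by rewrite card_prod !card_ffun !card_ord -expnD (card_vdom k).
transitivity (\sum_(ab : {ffun 'I_m -> {perm 'I_n}} * {ffun vdom k -> {perm 'I_n}}) Psi ab.1 ab.2).
  rewrite (reindex g); last exact: onW_bij.
  apply: eq_bigr => s _; rewrite /Psi /= mulrA; congr (_ * _).
    rewrite big_split_ord /=; congr (_ * _).
      by apply: eq_bigr => i _; rewrite ffunE.
    rewrite (eq_bigl xpredT) //; rewrite (reindex (@vpos m k)) /=; last first.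
      by apply: onW_bij; exists vinv.
    by apply: eq_bigr => p _; rewrite ffunE.
  apply: eq_bigr => v _; rewrite /matB; congr (F _ _); apply/ffunP => j;
    by rewrite !ffunE.
rewrite -pair_bigA /= big_distrr; apply: eq_bigr => a _.
rewrite /Psi -big_distrr /= (stepC hx hF a).
rewrite (eq_bigr (fun v : 'I_n => (\prod_(p : vdom k) ((x (a (tag p) v))%:R : C)) *
                           matAlpha x F [ffun j => a j v])); last first.
  move=> v _.
  rewrite (_ : [ffun p => a (tag p) v] = [ffun p => [ffun j => a j v] (tag p)]);
    last by apply/ffunP => p; rewrite !ffunE.
  rewrite diagG //; congr (_ * _); apply: eq_bigr => p _; rewrite ffunE.
  by [].
have hX : \prod_(v < n) \prod_(p : vdom k) ((x (a (tag p) v))%:R : C) =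
    (\prod_(i < n) ((x i)%:R : C)) ^+ N.
  rewrite exchange_big /= (eq_bigr (fun p : vdom k => \prod_(i < n) ((x i)%:R : C))).
    by rewrite prodr_const card_vdom.
  by move=> p _; rewrite prod_x_perm.
rewrite big_split /= hX.
rewrite (prod_tag k (fun j => psign C (a j))).
rewrite -(sign_comb C k (fun i => lshift N i \in I) a).
ring.
Qed.
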